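(* Let $X\subset\mathbb{R}$, $\delta>0$, and let $f,g:X\to\mathbb{R}^+$. Suppose the graph of $g$ intersects $N_\delta(g)$ boxes of the $\delta$-mesh, and that for every column $\mathbf{B}_i$ the graph of $f$ intersects at most $n_f$ boxes of $\mathbf{B}_i$. Then the graph of $f+g$ intersects at least $\frac{N_\delta(g)}{2n_f}$ boxes of the $\delta$-mesh.
   Context: The $\delta$-mesh consists of the disjoint boxes $B_i^j=[i\delta,(i+1)\delta)\times[j\delta,(j+1)\delta)$, $i,j\in\mathbb{Z}$; the $i$-th column is $\mathbf{B}_i=\bigcup_j B_i^j$. The graph of $h$ is $\{(x,h(x)):x\in X\}$, and $N_\delta(h)$ denotes the number of boxes of the $\delta$-mesh meeting the graph of $h$. *)

(* Defs.v *)
From HB Require Import structures.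
From mathcomp Require Import all_boot all_order all_algebra.
From mathcomp Require Import finmap.
From mathcomp Require Import boolp classical_sets cardinality reals.
Set Implicit Arguments. Unset Strict Implicit. Unset Printing Implicit Defensive.
Import Order.TTheory GRing.Theory Num.Theory.
Local Open Scope ring_scope.
Local Open Scope classical_set_scope.

Definition box (R : realType) (delta : R) (i j : int) : set (R * R) :=
  [set p | i%:~R * delta <= p.1 < (i + 1)%:~R * delta /\
           j%:~R * delta <= p.2 < (j + 1)%:~R * delta].

Definition graph (R : realType) (X : set R) (h : R -> R) : set (R * R) :=
  [set p | X p.1 /\ p.2 = h p.1].

Definition mesh_boxes (R : realType) (delta : R) (X : set R) (h : R -> R)
  : set (int * int) :=
  [set ij | box delta ij.1 ij.2 `&` graph X h !=set0].

(* N_delta(h): number of boxes meeting the graph (meaningful when finite). *)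
Definition Ndelta (R : realType) (delta : R) (X : set R) (h : R -> R) : nat :=
  #|` fset_set (mesh_boxes delta X h)|%fset.

(* Main.v *)
Set Warnings "-all".
Require Import Defs.
From HB Require Import structures.
From mathcomp Require Import all_boot all_order all_algebra.
From mathcomp Require Import finmap.
From mathcomp Require Import boolp classical_sets cardinality reals.
From mathcomp Require Import ring lra.
Import Order.TTheory GRing.Theory Num.Theory.
Local Open Scope ring_scope.
Local Open Scope classical_set_scope.

Lemma box_floor (R : realType) (d : R) i j (p : R * R) : 0 < d ->
  box d i j p <-> Num.floor (p.1 / d) = i /\ Num.floor (p.2 / d) = j.
Proof.
move=> d0; rewrite /box /=.
have E : forall (u : R) (n : int), (Num.floor (u / d) = n) <->
   (n%:~R * d <= u < (n + 1)%:~R * d).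
  move=> u n; split.
    by move/eqP; rewrite floor_eq ler_pdivlMr // ltr_pdivrMr.
  by move=> H; apply/eqP; rewrite floor_eq ler_pdivlMr // ltr_pdivrMr.
by rewrite !E.
Qed.

Lemma floorD_cases (R : realType) (u v : R) :
  Num.floor (u + v) = Num.floor u + Num.floor v \/
  Num.floor (u + v) = Num.floor u + Num.floor v + 1.
Proof.
have /andP[h1 h2] := floor_itv u; have /andP[h3 h4] := floor_itv v.
move: h1 h2 h3 h4; set a := Num.floor u; set b := Num.floor v.
rewrite !intrD => h1 h2 h3 h4.
case: (ltP (u + v) (a + b + 1)%:~R) => h.
  left; apply: floor_def; apply/andP; split; rewrite ?intrD //; lra.
right; apply: floor_def; apply/andP; move: h; rewrite !intrD => h; split=> //; lra.
Qed.

Lemma size_sum_count (T U : eqType) (s : seq T) (C : seq U) (phi : T -> U) :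
  uniq C -> all (fun a => phi a \in C) s ->
  size s = (\sum_(c <- C) count (fun a => phi a == c) s)%N.
Proof.
move=> uC; elim: s => [|a s IH] /=; first by rewrite big1.
move/andP=> [ha hs]; rewrite IH // big_split /=.
rewrite -add1n; congr (_ + _)%N.
have -> : 1%N = count_mem (phi a) C by rewrite count_uniq_mem ?ha.
elim: C {uC ha IH hs} => [|c C IHC]; first by rewrite big_nil.
by rewrite big_cons /= IHC eq_sym.
Qed.

Lemma sum_le_const (U : Type) (C : seq U) (F : U -> nat) n :
  (forall c, F c <= n)%N -> (\sum_(c <- C) F c <= size C * n)%N.
Proof.
move=> H; elim: C => [|c C IH]; first by rewrite big_nil.
by rewrite big_cons /= mulSn leq_add.
Qed.

Theorem lemma3 (R : realType) (X : set R) (delta : R) (f g : R -> R) (n_f : nat) :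
  0 < delta ->
  (forall x, X x -> 0 < f x) ->
  (forall x, X x -> 0 < g x) ->
  finite_set (mesh_boxes delta X g) ->
  (forall (i : int) (S : {fset int}),
     (forall j, j \in S -> mesh_boxes delta X f (i, j)) -> (#|` S| <= n_f)%N) ->
  finite_set (mesh_boxes delta X (f \+ g)) /\
  (Ndelta delta X g)%:R / (2 * n_f)%:R <= (Ndelta delta X (f \+ g))%:R :> R.
Proof.
move=> d0 fpos gpos finG hf.
pose fl := fun u : R => Num.floor (u / delta).
have mesh_iff : forall h i j, mesh_boxes delta X h (i, j) <->
    exists x, X x /\ fl x = i /\ fl (h x) = j.
  move=> h i j; split.
    case=> p [/(@box_floor _ _ _ _ _ d0) /= [e1 e2] [Xp hp]].
    by exists p.1; rewrite /fl -hp.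
  case=> x [Xx [e1 e2]]; exists (x, h x); split; last by [].
  by apply/box_floor.
have colfin : forall i, finite_set [set j | mesh_boxes delta X f (i, j)].
  move=> i; apply: contrapT => /(infinite_set_fset n_f.+1) [B BS Bn].
  have := hf i B (fun j jB => BS j jB).
  by rewrite leqNgt Bn.
have finF : finite_set (mesh_boxes delta X f).
  apply: (sub_finite_set _ (finite_setXR (A := fst @` mesh_boxes delta X g)
     (B := fun i => [set j | mesh_boxes delta X f (i, j)]) _ _)).
  - move=> [i j] Hf; split => //=.
    have [x [Xx [e1 e2]]] := (mesh_iff f i j).1 Hf.
    exists (i, fl (g x)) => //; apply/mesh_iff; by exists x.
  - exact: finite_image.
  - by move=> i _; apply: colfin.
have finFG : finite_set (mesh_boxes delta X (f \+ g)).
  apply: (sub_finite_set _ (bigcup_finite (D := mesh_boxes delta X g)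
    (F := fun a => \bigcup_(c in mesh_boxes delta X f)
        [set (a.1, a.2 + c.2); (a.1, a.2 + c.2 + 1)]) finG _)); last first.
    move=> a _; apply: bigcup_finite => // c _; exact: finite_set2.
  move=> [i m] /mesh_iff [x [Xx [e1 e2]]].
  exists (fl x, fl (g x)); first by apply/mesh_iff; exists x.
  exists (fl x, fl (f x)); first by apply/mesh_iff; exists x.
  move: e2; rewrite /fl /= mulrDl => <-; rewrite -e1.
  case: (@floorD_cases _ (f x / delta) (g x / delta)) => ->; [left|right];
    by congr (_, _); ring.
split => //.
have [w Hw] : {w : int * int -> R & forall a,
    mesh_boxes delta X g a -> X (w a) /\ fl (w a) = a.1 /\ fl (g (w a)) = a.2}.
  apply: (choice (P := fun a x => mesh_boxes delta X g a -> X x /\ fl x = a.1 /\ fl (g x) = a.2)).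
  move=> [i j]; case: (pselect (mesh_boxes delta X g (i, j))) => H.
    have [x Hx] := (mesh_iff g i j).1 H; by exists x.
  by exists 0.
pose A := fset_set (mesh_boxes delta X g).
pose C := fset_set (mesh_boxes delta X (f \+ g)).
pose phi := fun a : int * int => (a.1, fl (f (w a) + g (w a))).
pose k := fun a : int * int => fl (f (w a)).
pose b := fun a : int * int => (phi a).2 - a.2 - k a.
have inA : forall a, a \in A -> mesh_boxes delta X g a.
  by move=> a; rewrite in_fset_set // inE.
have phiC : forall a, a \in A -> phi a \in C.
  move=> [i j] /inA /Hw [Xw [e1 e2]]; rewrite in_fset_set // inE.
  apply/mesh_iff; by exists (w (i, j)).
have b01 : forall a, a \in A -> b a = 0 \/ b a = 1.
  move=> [i j] /inA /Hw [Xw [e1 e2]]; rewrite /b /phi /k /fl /= mulrDl.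
  move: e2; rewrite /fl /= => e2.
  case: (@floorD_cases _ (f (w (i, j)) / delta) (g (w (i, j)) / delta)) => ->;
    rewrite e2; [left|right]; ring.
have kF : forall a, a \in A -> mesh_boxes delta X f (a.1, k a).
  move=> [i j] /inA /Hw [Xw [e1 e2]]; apply/mesh_iff; by exists (w (i, j)).
have bound : forall c (q : pred (int * int)),
    (forall a, a \in A -> q a -> phi a == c) ->
    {in [seq a <- A | q a] &, injective k} -> (count q A <= n_f)%N.
  move=> c q qc kinj; rewrite -size_filter.
  have -> : size [seq a <- A | q a] = #|` [fset x in map k [seq a <- A | q a]]|%fset.
    rewrite card_fseq undup_id ?size_map //.
    rewrite map_inj_in_uniq //; apply: filter_uniq; exact: fset_uniq.
  apply: (hf c.1) => j; rewrite inE => /mapP [a]; rewrite mem_filter.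
  case/andP => qa aA ->; have /eqP <- := qc a aA qa; exact: kF.
have percount : forall c, (count (fun a => phi a == c) A <= 2 * n_f)%N.
  move=> c.
  pose p0 := fun a => (phi a == c) && (b a == 0).
  pose p1 := fun a => (phi a == c) && (b a != 0).
  have -> : count (fun a => phi a == c) A = (count p0 A + count p1 A)%N.
    rewrite -count_predUI.
    have -> : count (predI p0 p1) A = 0%N.
      apply/eqP; rewrite -leqn0 leqNgt -has_count; apply/hasPn => a _.
      by rewrite /= /p0 /p1; case: (b a == 0); rewrite ?andbF.
    rewrite addn0; apply: eq_count => a /=; rewrite /p0 /p1.
    by case: (phi a == c); case: (b a == 0).
  have inj : forall q : pred (int * int),
     (forall a, a \in A -> q a -> phi a == c) ->
     {in [seq a <- A | q a] &, forall a a', b a = b a'} ->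
     {in [seq a <- A | q a] &, injective k}.
    move=> q qc qb a a' ha ha' ek.
    have e := qb a a' ha ha'.
    move: ha ha'; rewrite !mem_filter => /andP[qa aA] /andP[qa' aA'].
    have /eqP ec := qc a aA qa; have /eqP ec' := qc a' aA' qa'.
    have e2 : a.2 = (phi a).2 - k a - b a by rewrite /b; ring.
    have e2' : a'.2 = (phi a').2 - k a' - b a' by rewrite /b; ring.
    have e1 : a.1 = a'.1 by have := congr1 fst ec; rewrite -ec' /=.
    have e3 : a.2 = a'.2 by rewrite e2 e2' ec ec' ek e.
    by rewrite [a]surjective_pairing [a']surjective_pairing e1 e3.
  rewrite mul2n -addnn leq_add //.
    apply: (bound c) => [a _ /andP[] //|]; apply: inj => [a _ /andP[] //|].
    by move=> a a'; rewrite !mem_filter /p0 => /andP[/andP[_ /eqP ->] _] /andP[/andP[_ /eqP ->] _].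
  apply: (bound c) => [a _ /andP[] //|]; apply: inj => [a _ /andP[] //|].
  move=> a a'; rewrite !mem_filter /p1 => /andP[/andP[_ h] aA] /andP[/andP[_ h'] aA'].
  case: (b01 a aA) h => [->//|->] _; by case: (b01 a' aA') h' => [->//|->].
have main : (Ndelta delta X g <= 2 * n_f * Ndelta delta X (f \+ g))%N.
  rewrite /Ndelta -/A -/C (@size_sum_count _ _ A C phi).
  - by rewrite mulnC; apply: sum_le_const.
  - exact: fset_uniq.
  - by apply/allP => a /phiC.
case: n_f hf percount main bound => [|n] _ _ main _.
  by rewrite muln0 invr0 mulr0 ler0n.
rewrite ler_pdivrMr ?ltr0n ?muln_gt0 // -natrM ler_nat mulnC; exact: main.
Qed.
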